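(* Let $H=(V,E)$ be a finite graph, $p\in(0,1)$, $q>1$, and let $P_{CM}$ be the transition matrix of the CM dynamics on $H$. With $M$, $M^*$ and $T_e$ ($e\in E$) as defined in the context, $$P_{CM}=M\Big(\prod_{e\in E}T_e\Big)M^*.$$
   Context: Configurations are $A\subseteq E$; $c(A)$ is the number of connected components of $(V,A)$. CM dynamics on $H$: from $A$, (i) activate each connected component of $(V,A)$ independently with probability $1/q$; (ii) remove all edges joining two active vertices; (iii) add each edge joining two active vertices independently with probability $p$. Let $\Omega_E=\{A\subseteq E\}$, $\Omega_V=\{0,1\}^V$ (1 = active, 0 = inactive), $\Omega_J=\Omega_V\times\Omega_E$. For $\sigma\in\Omega_V$, $E(\sigma)=\{(u,v)\in E:\sigma(u)=\sigma(v)\}$, and $f(\sigma,A)$ is the number of connected components of $(V,A)$ whose vertices are inactive. Define $M(B,(\sigma,A))=\mathbf 1(A=B)\mathbf 1(A\subseteq E(\sigma))(q-1)^{f(\sigma,A)}q^{-c(A)}$, $M^*((\sigma,A),B)=\mathbf 1(A=B)$, and for $e=(u,v)\in E$, $T_e((\sigma,A),(\tau,B))=\mathbf 1(\sigma=\tau)\cdot t$ where $t=p$ if $B=A\cup\{e\}$ and $\sigma(u)=\sigma(v)=1$; $t=1-p$ if $B=A\setminus\{e\}$ and $\sigma(u)=\sigma(v)=1$; and, if $\sigma(u)=0$ or $\sigma(v)=0$, $t=1$ if $B=A$ and $t=0$ otherwise (and $t=0$ in all other cases, i.e. $T_e$ only changes edge $e$). The $T_e$ commute, so the product order is irrelevant.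 *)

(* Defs.v *)
From HB Require Import structures.
From mathcomp Require Import all_boot all_order all_algebra.
Set Implicit Arguments. Unset Strict Implicit. Unset Printing Implicit Defensive.
Import Order.TTheory GRing.Theory Num.Theory.
Local Open Scope ring_scope.

(* A finite graph H = (V, E): vertex type V, edge type Ed (= E), and
   ends e = (u, v) the endpoints of edge e. *)

Definition kernel (R : Type) (X Y : Type) := X -> Y -> R.

Definition kcomp (R : pzRingType) (X Y Z : finType)
  (K1 : kernel R X Y) (K2 : kernel R Y Z) : kernel R X Z :=
  fun x z => \sum_(y : Y) K1 x y * K2 y z.

Definition kid (R : pzRingType) (X : finType) : kernel R X X :=
  fun x y => (x == y)%:R.

(* Omega_V = {0,1}^V (true = active), Omega_E = subsets of E,
   Omega_J = Omega_V * Omega_E. *)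
Definition OmegaJ (V Ed : finType) := ({ffun V -> bool} * {set Ed})%type.

Definition adj (V Ed : finType) (ends : Ed -> V * V) (A : {set Ed}) : rel V :=
  fun u v => [exists e in A, (ends e == (u, v)) || (ends e == (v, u))].

Definition ncomp (V Ed : finType) (ends : Ed -> V * V) (A : {set Ed}) : nat :=
  n_comp (adj ends A) predT.

(* f(sigma, A): number of components of (V, A) all of whose vertices are inactive
   (each component counted through its representative root) *)
Definition ninact (V Ed : finType) (ends : Ed -> V * V)
  (s : {ffun V -> bool}) (A : {set Ed}) : nat :=
  #|[set r : V | (fingraph.root (adj ends A) r == r) &&
                 [forall v, connect (adj ends A) r v ==> ~~ s v]]|.

Definition nact (V Ed : finType) (ends : Ed -> V * V)
  (s : {ffun V -> bool}) (A : {set Ed}) : nat :=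
  #|[set r : V | (fingraph.root (adj ends A) r == r) &&
                 [forall v, connect (adj ends A) r v ==> s v]]|.

Definition Esame (V Ed : finType) (ends : Ed -> V * V) (s : {ffun V -> bool})
  : {set Ed} := [set e | s (ends e).1 == s (ends e).2].

Definition Eact (V Ed : finType) (ends : Ed -> V * V) (s : {ffun V -> bool})
  : {set Ed} := [set e | s (ends e).1 && s (ends e).2].

(* sigma is constant on every connected component of (V, A), i.e. sigma arises
   from an activation of the components of (V, A) *)
Definition compatible (V Ed : finType) (ends : Ed -> V * V)
  (s : {ffun V -> bool}) (A : {set Ed}) : bool :=
  [forall u, forall v, connect (adj ends A) u v ==> (s u == s v)].

(* Transition matrix of the CM dynamics:
   (i) choose the activation sigma (each component active w.p. 1/q),
   (ii)+(iii) edges not joining two active vertices are kept as in A;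
   each edge joining two active vertices is present in B independently w.p. p. *)
Definition P_CM (R : realFieldType) (V Ed : finType) (ends : Ed -> V * V)
  (p q : R) : kernel R {set Ed} {set Ed} :=
  fun A B =>
    \sum_(s : {ffun V -> bool} | compatible ends s A)
      ((q^-1) ^+ nact ends s A * (1 - q^-1) ^+ ninact ends s A *
       ((B :\: Eact ends s == A :\: Eact ends s)%:R *
        p ^+ #|B :&: Eact ends s| * (1 - p) ^+ #|Eact ends s :\: B|)).

Definition Mker (R : realFieldType) (V Ed : finType) (ends : Ed -> V * V)
  (q : R) : kernel R {set Ed} (OmegaJ V Ed) :=
  fun B x =>
    ((x.2 == B) && (x.2 \subset Esame ends x.1))%:R *
    (q - 1) ^+ ninact ends x.1 x.2 * (q ^+ ncomp ends x.2)^-1.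

Definition Mstar (R : realFieldType) (V Ed : finType)
  : kernel R (OmegaJ V Ed) {set Ed} :=
  fun x B => (x.2 == B)%:R.

Definition Te (R : realFieldType) (V Ed : finType) (ends : Ed -> V * V)
  (p : R) (e : Ed) : kernel R (OmegaJ V Ed) (OmegaJ V Ed) :=
  fun x y =>
    if x.1 == y.1 then
      if x.1 (ends e).1 && x.1 (ends e).2 then
        (if y.2 == x.2 :|: [set e] then p
         else if y.2 == x.2 :\ e then 1 - p else 0)
      else (y.2 == x.2)%:R
    else 0.

(* prod_{e in E} T_e (the T_e commute; we multiply in the enumeration order) *)
Definition Tprod (R : realFieldType) (V Ed : finType) (ends : Ed -> V * V)
  (p : R) : kernel R (OmegaJ V Ed) (OmegaJ V Ed) :=
  foldr (fun e K => kcomp (Te ends p e) K) (@kid R (OmegaJ V Ed)) (enum Ed).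

(* Main.v *)
Require Import Defs.
From HB Require Import structures.
From mathcomp Require Import all_boot all_order all_algebra.
From mathcomp Require Import ring.
Set Implicit Arguments. Unset Strict Implicit.
Import Order.TTheory GRing.Theory Num.Theory.
Local Open Scope ring_scope.

Lemma sum_single (R : realFieldType) (T : finType) (F : T -> R) y0 :
  (forall y, y != y0 -> F y = 0) -> \sum_y F y = F y0.
Proof. by move=> H; rewrite (bigD1 y0) //= big1 ?addr0 // => y /H. Qed.

Lemma sum_snd (R : realFieldType) (X Y : finType) (F : X * Y -> R) a :
  (forall x, x.2 != a -> F x = 0) -> \sum_x F x = \sum_u F (u, a).
Proof.
move=> H; transitivity (\sum_i \sum_j F (i, j)).
  by rewrite pair_big; apply: eq_bigr => -[].
by apply: eq_bigr => i _; apply: sum_single => j /= Hj; apply: H.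
Qed.

Lemma sum_fst (R : realFieldType) (X Y : finType) (F : X * Y -> R) a :
  (forall x, x.1 != a -> F x = 0) -> \sum_x F x = \sum_u F (a, u).
Proof.
move=> H; transitivity (\sum_i \sum_j F (i, j)).
  by rewrite pair_big; apply: eq_bigr => -[].
rewrite (bigD1 a) //= [X in _ + X]big1 ?addr0 // => i Hi; apply: big1 => j _; exact: H.
Qed.

Lemma prod_ind (R : realFieldType) (T : finType) (Q P : pred T) :
  \prod_(x | Q x) ((P x)%:R : R) = ([forall x, Q x ==> P x])%:R.
Proof.
case: (boolP [forall x, Q x ==> P x]) => [/forallP H | /forallPn [x Hx]].
  by apply: big1 => x Qx; have := H x; rewrite Qx /= => ->.
rewrite negb_imply in Hx; case/andP: Hx => Qx nP.
by rewrite (bigD1 x) //= (negbTE nP) mul0r.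
Qed.

Definition hh (R : realFieldType) (V Ed : finType) (ends : Ed -> V * V) (p : R)
  (s : seq Ed) (sg : {ffun V -> bool}) (A B : {set Ed}) (x : Ed) : R :=
  if (x \in s) && (sg (ends x).1 && sg (ends x).2) then (if x \in B then p else 1 - p)
  else ((x \in B) == (x \in A))%:R.

Lemma Te_same (R : realFieldType) (V Ed : finType) (ends : Ed -> V * V) (p : R) e sg
  (A u : {set Ed}) :
  Te ends p e (sg, A) (sg, u) =
      if sg (ends e).1 && sg (ends e).2 then
        (if u == A :|: [set e] then p
         else if u == A :\ e then 1 - p else 0)
      else (u == A)%:R.
Proof. by rewrite /Te /= eqxx. Qed.

Lemma Tfold (R : realFieldType) (V Ed : finType) (ends : Ed -> V * V) (p : R) s :
  uniq s -> forall sg A tau B,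
  foldr (fun e K => kcomp (Te ends p e) K) (@kid R (OmegaJ V Ed)) s (sg, A) (tau, B)
  = (sg == tau)%:R * \prod_x hh ends p s sg A B x.
Proof.
elim: s => [|e s IH] /=.
  move=> _ sg A tau B; rewrite /kid xpair_eqE.
  rewrite (eq_bigr (fun x => ((x \in B) == (x \in A))%:R)); last by move=> x _; rewrite /hh.
  rewrite prod_ind.
  have -> : [forall x, xpredT x ==> ((x \in B) == (x \in A))] = (A == B).
    apply/forallP/eqP => [H|-> x //=]; apply/setP => x; have /eqP := H x; by [].
  by case: (sg == tau); case: (A == B); rewrite /= ?mul1r ?mul0r.
case/andP => es us sg A tau B; rewrite /kcomp.
rewrite (sum_fst (a := sg)); last first.
  by move=> [u C] /= Hu; rewrite /Te /= eq_sym (negbTE Hu) mul0r.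
rewrite (eq_bigr (fun u => (if sg (ends e).1 && sg (ends e).2 then
        (if u == A :|: [set e] then p
         else if u == A :\ e then 1 - p else 0)
      else (u == A)%:R) * foldr (fun e K => kcomp (Te ends p e) K) (@kid R (OmegaJ V Ed)) s (sg, u) (tau, B))); last first.
  by move=> u _ /=; rewrite Te_same.
case act: (sg (ends e).1 && sg (ends e).2) => /=.
  rewrite (bigD1 (A :|: [set e])) //= eqxx.
  have ne : A :\ e != A :|: [set e].
    by apply/negP => /eqP/setP/(_ e); rewrite !inE eqxx /= orbT.
  rewrite (bigD1 (A :\ e)) //= (negbTE ne) eqxx.
  rewrite big1 ?addr0; last first.
    by move=> C /andP [/negbTE -> /negbTE ->]; rewrite mul0r.
  rewrite !IH //.
  rewrite (bigD1 e (F := hh ends p s sg (A :|: [set e]) B)) //.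
  rewrite (bigD1 e (F := hh ends p s sg (A :\ e) B)) //.
  rewrite (bigD1 e (F := hh ends p (e :: s) sg A B)) //.
  have E1 : \prod_(x | x != e) hh ends p s sg (A :|: [set e]) B x =
            \prod_(x | x != e) hh ends p (e :: s) sg A B x.
    by apply: eq_bigr => x xe; rewrite /hh !inE (negbTE xe) ?orbF.
  have E2 : \prod_(x | x != e) hh ends p s sg (A :\ e) B x =
            \prod_(x | x != e) hh ends p (e :: s) sg A B x.
    by apply: eq_bigr => x xe; rewrite /hh !inE (negbTE xe) ?orbF.
  rewrite E1 E2 /=.
  set P := \prod_(x | x != e) _.
  rewrite /hh (negbTE es) act !inE eqxx /= orbT.
  by case: (e \in B) => /=; rewrite ?mul1r ?mul0r; ring.
rewrite (bigD1 A) //= eqxx mul1r big1 ?addr0; last first.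
  by move=> C /negbTE ->; rewrite mul0r.
rewrite IH //; congr (_ * _); apply: eq_bigr => x _.
rewrite /hh inE; case: (eqVneq x e) => [->|xe] /=; last by [].
by rewrite act !andbF.
Qed.

Lemma hh_enum (R : realFieldType) (V Ed : finType) (ends : Ed -> V * V) (p : R) sg A B :
  \prod_x hh ends p (enum Ed) sg A B x =
  ((B :\: Eact ends sg == A :\: Eact ends sg)%:R *
       p ^+ #|B :&: Eact ends sg| * (1 - p) ^+ #|Eact ends sg :\: B|).
Proof.
set S := Eact ends sg.
rewrite (bigID (fun x => x \in S)) /=.
rewrite (eq_bigr (fun x => if x \in B then p else 1 - p)); last first.
  by move=> x; rewrite /hh mem_enum inE => ->.
rewrite [X in _ * X](eq_bigr (fun x => ((x \in B) == (x \in A))%:R)); last first.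
  by move=> x; rewrite /hh mem_enum inE => /negbTE ->.
rewrite prod_ind (bigID (fun x => x \in B)) /=.
rewrite (eq_bigr (fun=> p)); last by move=> x /andP [_ ->].
rewrite [X in _ * X * _](eq_bigr (fun=> 1 - p)); last by move=> x /andP [_ /negbTE ->].
rewrite (eq_bigl (mem (B :&: S))); last by move=> x; rewrite !inE andbC.
rewrite [X in _ * X * _](eq_bigl (mem (S :\: B))); last by move=> x; rewrite !inE andbC.
rewrite !prodr_const.
have -> : [forall x, (x \notin S) ==> ((x \in B) == (x \in A))] =
          (B :\: S == A :\: S).
  apply/forallP/eqP => [H|H x].
    apply/setP => x; rewrite !in_setD; have := H x.
    by case: (x \in S) => //= /eqP ->.
  have := congr1 (fun X : {set Ed} => x \in X) H; rewrite /= !in_setD.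
  by case: (x \in S) => //= ->.
by rewrite mulrC mulrA.
Qed.

Lemma compat_sub (V Ed : finType) (ends : Ed -> V * V) s A :
  compatible ends s A = (A \subset Esame ends s).
Proof.
apply/idP/idP.
  move/forallP=> H; apply/subsetP => e eA; rewrite inE.
  have /forallP/(_ (ends e).2)/implyP := H (ends e).1; apply.
  apply: connect1; rewrite /adj; apply/existsP; exists e.
  by rewrite eA -surjective_pairing eqxx.
move=> sub; apply/forallP => u; apply/forallP => v; apply/implyP.
case/connectP => pth Hp ->.
elim: pth u Hp => [|w pth IH] u /=; first by rewrite eqxx.
case/andP => auv Hp.
have -> : s u = s w.
  case/existsP: auv => e /andP [eA /orP [/eqP E | /eqP E]];
  have := subsetP sub e eA; rewrite inE E /=; first by move/eqP.
  by move/eqP.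
exact: IH.
Qed.

Lemma ncomp_split (V Ed : finType) (ends : Ed -> V * V) s A :
  compatible ends s A -> (nact ends s A + ninact ends s A = ncomp ends A)%N.
Proof.
move=> /forallP C.
have C' : forall u v, connect (adj ends A) u v -> s u = s v.
  by move=> u v uv; have /forallP/(_ v)/implyP/(_ uv)/eqP := C u.
set Rt := [set r | fingraph.root (adj ends A) r == r].
have -> : nact ends s A = #|Rt :&: [set r | s r]|.
  rewrite /nact; apply: eq_card => r; rewrite !inE; congr (_ && _).
  apply/forallP/idP => [H|sr v]; first by have := H r; rewrite connect0.
  by apply/implyP => /C' <-.
have -> : ninact ends s A = #|Rt :\: [set r | s r]|.
  rewrite /ninact; apply: eq_card => r; rewrite !inE andbC; congr (_ && _).
  apply/forallP/idP => [H|sr v]; first by have := H r; rewrite connect0.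
  by apply/implyP => /C' <-.
rewrite cardsID /ncomp /n_comp_mem; apply: eq_card => r.
by rewrite !inE andbT.
Qed.
Unset Implicit Arguments. Set Strict Implicit.

Theorem mainTheorem5 (R : realFieldType) (V Ed : finType) (ends : Ed -> V * V)
  (p q : R) (hp0 : 0 < p) (hp1 : p < 1) (hq : 1 < q) :
  forall A B : {set Ed},
    P_CM ends p q A B =
    kcomp (kcomp (Mker ends q) (Tprod ends p)) (@Mstar R V Ed) A B.
Proof.
move=> A B.
have q0 : q != 0 by rewrite gt_eqF // (lt_trans ltr01 hq).
rewrite /kcomp.
under eq_bigr => y _ do rewrite mulr_suml.
rewrite exchange_big /=.
rewrite (sum_snd (a := A)); last first.
  by move=> x xA; apply: big1 => y _; rewrite /Mker (negbTE xA) /= !mul0r.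
rewrite /P_CM big_mkcond /=; apply: eq_bigr => sg _.
rewrite (sum_snd (a := B)); last first.
  by move=> y yB; rewrite /Mstar (negbTE yB) mulr0.
rewrite (sum_single (y0 := sg)); last first.
  by move=> tau st; rewrite /Tprod Tfold ?enum_uniq // [sg == tau]eq_sym (negbTE st) mul0r mulr0 mul0r.
rewrite /Tprod Tfold ?enum_uniq // hh_enum /Mstar /= !eqxx mulr1 mul1r.
rewrite /Mker /= eqxx /= -compat_sub.
case: ifP => c; last by rewrite !mul0r.
rewrite mul1r -(ncomp_split c).
have -> : 1 - q^-1 = (q - 1) * q^-1 by field.
rewrite exprMn exprD invfM !exprVn.
ring.
Qed.
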